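(* Let $F$, $H$, $X$, $\Omega$, $Q$ and the sequences generated by the IneIREG method be as described in the context, and suppose $H$ is $\mu$-strongly monotone for some $\mu>0$. Suppose $\eta_k\equiv\eta>0$; $\lambda_k\in[\underline\lambda,\overline\lambda]$ for all $k\ge0$ with $0<\underline\lambda\le\overline\lambda<1/L$, $L:=L_F+\eta L_H$; and $\alpha_0\in[0,1]$ and $\alpha_{k+1}\le(1-\beta_k)\alpha_k$ for all $k\ge0$, where $\beta_k:=\big(\frac{1}{1-\lambda_k^2L^2}+\frac{1}{2\lambda_k\eta\mu}\big)^{-1}$. Define $p_k:=\big(\prod_{i=0}^k(1-\beta_i)\big)^{-1}$ for $k\ge0$, for $k\ge1$ $\Lambda_k:=\sum_{j=0}^{k-1}\lambda_j\eta p_j$ and $\overline y_k:=\Lambda_k^{-1}\sum_{j=0}^{k-1}\lambda_j\eta p_jy_j$, and $\beta:=\big(\frac{1}{1-\overline\lambda^2L^2}+\frac{1}{2\underline\lambda\eta\mu}\big)^{-1}\in(0,1)$. Then for all $k\ge1$, $$0\le\mathrm{Gap}(\overline y_k,F,X)\le(k+1)(1-\beta)^k\Big(\frac{D_X^2}{\underline\lambda}\Big)+\eta\Big(\frac{\overline\lambda C_HD_X}{\underline\lambda}\Big).$$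
   Context: Work in $\mathbb{R}^n$ with Euclidean inner product $\langle\cdot,\cdot\rangle$ and norm $\|\cdot\|$. The maps $F\colon \mathrm{Dom}\,F\to\mathbb{R}^n$ and $H\colon\mathrm{Dom}\,H\to\mathbb{R}^n$ are monotone and Lipschitz continuous with constants $L_F>0$ and $L_H>0$; $H$ is $\mu$-strongly monotone means $\langle H(x)-H(y),x-y\rangle\ge\mu\|x-y\|^2$ for all $x,y\in\mathrm{Dom}\,H$. $X$ is a nonempty compact convex set and $\Omega$ a nonempty closed convex set with $X\subset\Omega\subset\mathrm{Dom}\,F\cap\mathrm{Dom}\,H$; $P_X,P_\Omega$ denote orthogonal projections. $Q:=\{x\in X:\langle F(x),y-x\rangle\ge0\ \forall y\in X\}$ is assumed nonempty. $D_X:=\sup_{x,y\in X}\|x-y\|$, $C_H:=\sup_{x\in X}\|H(x)\|$. $\mathrm{Gap}(z,F,X):=\sup_{x\in X}\langle F(x),z-x\rangle$. IneIREG method: start with $x_0=x_{-1}\in X$; for $k=0,1,\dots$, with parameters $\alpha_k\ge0$, $\lambda_k>0$, $\eta_k>0$, set $w_k=x_k+\alpha_k(x_k-x_{k-1})$, $w'_k=P_\Omega(w_k)$, $y_k=P_X\big(w_k-\lambda_k(F(w'_k)+\eta_kH(w'_k))\big)$, $x_{k+1}=P_X\big(w_k-\lambda_k(F(y_k)+\eta_kH(y_k))\big)$. *)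

(* Defs.v *)
From HB Require Import structures.
From mathcomp Require Import all_boot all_order all_algebra.
From mathcomp Require Import all_classical all_reals all_analysis.
Set Implicit Arguments. Unset Strict Implicit. Unset Printing Implicit Defensive.
Import Order.TTheory GRing.Theory Num.Theory.
Import numFieldNormedType.Exports.
Local Open Scope classical_set_scope.
Local Open Scope ring_scope.

Definition dotp (R : realType) (n : nat) (u v : 'rV[R]_n) : R :=
  \sum_(i < n) u ord0 i * v ord0 i.
Definition enorm (R : realType) (n : nat) (u : 'rV[R]_n) : R :=
  Num.sqrt (dotp u u).

Definition is_projection (R : realType) (n : nat) (C : set 'rV[R]_n)
  (P : 'rV[R]_n -> 'rV[R]_n) : Prop :=
  forall z, C (P z) /\ forall y, C y -> enorm (z - P z) <= enorm (z - y).

Definition monotone_op (R : realType) (n : nat) (D : set 'rV[R]_n)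
  (F : 'rV[R]_n -> 'rV[R]_n) : Prop :=
  forall x y, D x -> D y -> 0 <= dotp (F x - F y) (x - y).

Definition str_monotone_op (R : realType) (n : nat) (D : set 'rV[R]_n)
  (F : 'rV[R]_n -> 'rV[R]_n) (mu : R) : Prop :=
  forall x y, D x -> D y -> mu * enorm (x - y) ^+ 2 <= dotp (F x - F y) (x - y).

Definition lipschitz_op (R : realType) (n : nat) (D : set 'rV[R]_n)
  (F : 'rV[R]_n -> 'rV[R]_n) (L : R) : Prop :=
  forall x y, D x -> D y -> enorm (F x - F y) <= L * enorm (x - y).

Definition Gap (R : realType) (n : nat) (z : 'rV[R]_n)
  (F : 'rV[R]_n -> 'rV[R]_n) (X : set 'rV[R]_n) : R :=
  sup [set dotp (F x) (z - x) | x in X].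

Definition diamX (R : realType) (n : nat) (X : set 'rV[R]_n) : R :=
  sup [set enorm (xy.1 - xy.2) | xy in X `*` X].

Definition supnorm (R : realType) (n : nat) (H : 'rV[R]_n -> 'rV[R]_n)
  (X : set 'rV[R]_n) : R :=
  sup [set enorm (H x) | x in X].

Definition VIsol (R : realType) (n : nat) (F : 'rV[R]_n -> 'rV[R]_n)
  (X : set 'rV[R]_n) : set 'rV[R]_n :=
  [set x | X x /\ forall y, X y -> 0 <= dotp (F x) (y - x)].

Definition betak (R : realType) (lam L eta mu : R) : R :=
  ((1 - lam ^+ 2 * L ^+ 2)^-1 + (2 * lam * eta * mu)^-1)^-1.

Definition pk (R : realType) (beta : nat -> R) (k : nat) : R :=
  (\prod_(i < k.+1) (1 - beta i))^-1.

Definition Lambdak (R : realType) (lam p : nat -> R) (eta : R) (k : nat) : R :=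
  \sum_(j < k) lam j * eta * p j.

Definition ybar (R : realType) (n : nat) (lam p : nat -> R) (eta : R)
  (y : nat -> 'rV[R]_n) (k : nat) : 'rV[R]_n :=
  (Lambdak lam p eta k)^-1 *: \sum_(j < k) (lam j * eta * p j) *: y j.

(* Main.v *)
Require Import Defs.
From HB Require Import structures.
From mathcomp Require Import all_boot all_order all_algebra.
From mathcomp Require Import all_classical all_reals all_analysis.
From mathcomp Require Import ring lra.
Import Order.TTheory GRing.Theory Num.Theory.
Import numFieldNormedType.Exports.
Local Open Scope classical_set_scope.
Local Open Scope ring_scope.
Set Implicit Arguments. Unset Strict Implicit. Unset Printing Implicit Defensive.


Section Dot.
Variables (R : realType) (n : nat).
Implicit Types u v z : 'rV[R]_n.

Lemma dotpC u v : dotp u v = dotp v u.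
Proof. by apply: eq_bigr => i _; rewrite mulrC. Qed.

Lemma dotpDl u v z : dotp (u + v) z = dotp u z + dotp v z.
Proof. by rewrite /dotp -big_split; apply: eq_bigr => i _; rewrite !mxE mulrDl. Qed.

Lemma dotpZl (a : R) u v : dotp (a *: u) v = a * dotp u v.
Proof. by rewrite /dotp mulr_sumr; apply: eq_bigr => i _; rewrite !mxE mulrA. Qed.

Lemma dotpNl u v : dotp (- u) v = - dotp u v.
Proof. by rewrite -scaleN1r dotpZl mulN1r. Qed.

Lemma dotpBl u v z : dotp (u - v) z = dotp u z - dotp v z.
Proof. by rewrite dotpDl dotpNl. Qed.

Lemma dotpDr u v z : dotp z (u + v) = dotp z u + dotp z v.
Proof. by rewrite dotpC dotpDl !(dotpC z). Qed.

Lemma dotpZr (a : R) u v : dotp v (a *: u) = a * dotp v u.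
Proof. by rewrite dotpC dotpZl dotpC. Qed.

Lemma dotpNr u v : dotp v (- u) = - dotp v u.
Proof. by rewrite dotpC dotpNl dotpC. Qed.

Lemma dotpBr u v z : dotp z (u - v) = dotp z u - dotp z v.
Proof. by rewrite dotpDr dotpNr. Qed.

Lemma dotp_ge0 u : 0 <= dotp u u.
Proof. by apply: sumr_ge0 => i _; rewrite -expr2 sqr_ge0. Qed.

Lemma enorm_ge0 u : 0 <= enorm u.
Proof. exact: sqrtr_ge0. Qed.

Lemma enorm_sq u : enorm u ^+ 2 = dotp u u.
Proof. by rewrite /enorm sqr_sqrtr // dotp_ge0. Qed.

Lemma dotp_sumr (I : Type) (r : seq I) (P : pred I) (f : I -> 'rV[R]_n) u :
  dotp u (\sum_(j <- r | P j) f j) = \sum_(j <- r | P j) dotp u (f j).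
Proof.
elim/big_rec2: _ => [|j s1 s2 _ <-]; last by rewrite dotpDr.
by rewrite /dotp big1 // => i _; rewrite mxE mulr0.
Qed.

Lemma young u v (t : R) : 0 < t -> 2 * dotp u v <= t * dotp u u + t^-1 * dotp v v.
Proof.
move=> t0; have := dotp_ge0 (t *: u - v).
rewrite !(dotpBl, dotpBr, dotpZl, dotpZr) (dotpC v u) => h.
have ht : 0 <= t^-1 by rewrite invr_ge0 ltW.
have := mulr_ge0 ht h.
rewrite [X in 0 <= X](_ : _ = t * dotp u u - 2 * dotp u v + t^-1 * dotp v v); last first.
  by field; rewrite gt_eqF.
lra.
Qed.

Lemma dotp_eq0 u : dotp u u = 0 -> u = 0.
Proof.
move=> h; apply/rowP => i; rewrite mxE.
have /psumr_eq0P H : (forall j : 'I_n, true -> 0 <= u ord0 j * u ord0 j).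
  by move=> j _; rewrite -expr2 sqr_ge0.
by have := H h i isT; move/eqP; rewrite mulf_eq0 orbb => /eqP.
Qed.

Lemma CS u v : dotp u v <= enorm u * enorm v.
Proof.
have [u0|] := eqVneq (dotp u u) 0.
  have d0 : dotp u v = 0 by rewrite (dotp_eq0 u0) /dotp big1 // => i _; rewrite mxE mul0r.
  by rewrite d0 mulr_ge0 ?enorm_ge0.
have [v0|vn0 un0] := eqVneq (dotp v v) 0.
  have d0 : dotp u v = 0 by rewrite (dotp_eq0 v0) /dotp big1 // => i _; rewrite mxE mulr0.
  by rewrite d0 mulr_ge0 ?enorm_ge0.
have eu : 0 < enorm u by rewrite /enorm sqrtr_gt0 lt_neqAle eq_sym un0 dotp_ge0.
have ev : 0 < enorm v by rewrite /enorm sqrtr_gt0 lt_neqAle eq_sym vn0 dotp_ge0.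
have := @young u v _ (divr_gt0 ev eu).
rewrite -!enorm_sq invf_div.
have -> : enorm v / enorm u * enorm u ^+ 2 + enorm u / enorm v * enorm v ^+ 2
  = 2 * (enorm u * enorm v) by field; rewrite ?gt_eqF.
lra.
Qed.

Lemma sq_subZ u v (t : R) :
  dotp (u - t *: v) (u - t *: v) = dotp u u - 2 * t * dotp u v + t ^+ 2 * dotp v v.
Proof. rewrite !(dotpBl, dotpBr, dotpZl, dotpZr) (dotpC v u); ring. Qed.

Lemma sq_add u v : dotp (u + v) (u + v) = dotp u u + 2 * dotp u v + dotp v v.
Proof. rewrite !(dotpDl, dotpDr) (dotpC v u); ring. Qed.

End Dot.


Lemma mki01 (R : realType) (t : R) : 0 <= t -> t <= 1 -> {p : {i01 R} | p%:num = t}.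
Proof.
move=> t0 t1.
have H : Itv.spec (@Itv.num_sem R) (Itv.Real `[0%Z, 1%Z]) t.
  by rewrite /Itv.spec /Itv.num_sem /= num_real in_itv /= t0 t1.
by exists (Itv.mk H).
Qed.

Section Proj.
Variables (R : realType) (n : nat).
Implicit Types u v z : 'rV[R]_n.

Lemma enorm_le_sq u v : enorm u <= enorm v -> dotp u u <= dotp v v.
Proof.
move=> h; have := ler_pM (enorm_ge0 u) (enorm_ge0 u) h h.
by rewrite -!expr2 !enorm_sq.
Qed.

Lemma conv_mem (C : set 'rV[R]_n) : convex_set C ->
  forall a b (t : R), 0 <= t -> t <= 1 -> C a -> C b -> C (t *: a + (1 - t) *: b).
Proof.
move=> cC a b t t0 t1 Ca Cb.
have [p pt] := mki01 t0 t1.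
have := cC a b p; rewrite !inE => /(_ Ca Cb).
by rewrite /conv /= pt.
Qed.

Lemma proj_vi (C : set 'rV[R]_n) P : convex_set C -> is_projection C P ->
  forall z y, C y -> dotp (z - P z) (y - P z) <= 0.
Proof.
move=> cC hP z y Cy.
have [CP Pmin] := hP z.
set e := z - P z; set d := y - P z.
have key : forall t : R, 0 < t -> t <= 1 -> 2 * dotp e d <= t * dotp d d.
  move=> t t0 t1.
  have Cq := conv_mem cC (ltW t0) t1 Cy CP.
  have := enorm_le_sq (Pmin _ Cq).
  have -> : z - (t *: y + (1 - t) *: P z) = e - t *: d.
    by rewrite /e /d; apply/rowP => i; rewrite !mxE; ring.
  rewrite sq_subZ /e => h.
  have h2 : t * (2 * dotp e d) <= t * (t * dotp d d) by nra.
  by rewrite ler_pM2l in h2.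
rewrite leNgt; apply/negP => ed0.
have dd0 := dotp_ge0 d.
have s0 : 0 < dotp e d + dotp d d by lra.
have := key (dotp e d / (dotp e d + dotp d d)).
rewrite divr_gt0 // ler_pdivrMr // => /(_ isT).
rewrite mul1r lerDl dd0 => /(_ isT).
have -> : dotp e d / (dotp e d + dotp d d) * dotp d d
   = dotp e d * (dotp d d / (dotp e d + dotp d d)) by rewrite mulrAC mulrA.
have : dotp d d / (dotp e d + dotp d d) <= 1 by rewrite ler_pdivrMr // mul1r lerDr ltW.
move=> h1 h2.
have h3 : dotp e d * (dotp d d / (dotp e d + dotp d d)) <= dotp e d.
  by rewrite -[leRHS]mulr1 ler_pM2l.
lra.
Qed.

Lemma proj_nonexp (C : set 'rV[R]_n) P : convex_set C -> is_projection C P ->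
  forall z y, C y -> dotp (P z - y) (P z - y) <= dotp (z - y) (z - y).
Proof.
move=> cC hP z y Cy.
have := proj_vi cC hP z Cy.
have -> : z - y = (z - P z) + (P z - y) by apply/rowP => i; rewrite !mxE; ring.
set e := z - P z; set d := P z - y.
have -> : y - P z = - d by rewrite /d opprB.
rewrite dotpNr sq_add.
have := dotp_ge0 e; lra.
Qed.

End Proj.


Section Step.
Variables (R : realType) (n : nat).
Implicit Types u v z : 'rV[R]_n.

Lemma beta_ineq (c d : R) u v : 0 < c -> 0 < d ->
  (c^-1 + d^-1)^-1 * dotp (u + v) (u + v) <= c * dotp u u + d * dotp v v.
Proof.
move=> c0 d0.
have := young u v (divr_gt0 c0 d0); rewrite invf_div => hy.
have b0 : 0 < (c^-1 + d^-1)^-1 by rewrite invr_gt0 addr_gt0 // invr_gt0.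
have hs : dotp (u + v) (u + v) <= (1 + c / d) * dotp u u + (1 + d / c) * dotp v v.
  rewrite sq_add; lra.
have hs2 : (c^-1 + d^-1)^-1 * dotp (u + v) (u + v) <=
   (c^-1 + d^-1)^-1 * ((1 + c / d) * dotp u u + (1 + d / c) * dotp v v).
  by rewrite ler_pM2l.
apply: (le_trans hs2); rewrite le_eqVlt; apply/orP; left; apply/eqP.
field. all: rewrite ?gt_eqF ?addr_gt0 //.
Qed.

Ltac vring := apply/rowP => ?; rewrite !mxE; ring.

Lemma step_ineq x w y u Fx Hx Fy Hy Fw Hw (lam eta mu L e1 : R) :
  0 < lam -> 0 < eta -> 0 < mu -> 0 <= L -> lam * L < 1 ->
  dotp (w - lam *: (Fy + eta *: Hy) - u) (x - u) <= 0 ->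
  dotp (w - lam *: (Fw + eta *: Hw) - y) (u - y) <= 0 ->
  dotp ((Fw + eta *: Hw) - (Fy + eta *: Hy)) (u - y) <= L * e1 * enorm (u - y) ->
  0 <= e1 -> e1 ^+ 2 <= dotp (w - y) (w - y) ->
  0 <= dotp (Fy - Fx) (y - x) ->
  mu * dotp (y - x) (y - x) <= dotp (Hy - Hx) (y - x) ->
  dotp (u - x) (u - x) <= (1 - betak lam L eta mu) * dotp (w - x) (w - x)
    - 2 * lam * (dotp Fx (y - x) + eta * dotp Hx (y - x)).
Proof.
move=> l0 e0 m0 L0 lL P1 P2 Lip e10 e1sq monF smonH.
pose A := w - y; pose B := y - u; pose C := u - x.
have E1 : w - x = A + (B + C) by rewrite /A /B /C; vring.
have E2 : w - lam *: (Fy + eta *: Hy) - u = (A + B) - lam *: (Fy + eta *: Hy).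
  by rewrite /A /B; vring.
have E3 : x - u = - C by rewrite /C; vring.
have E4 : w - lam *: (Fw + eta *: Hw) - y = A - lam *: (Fw + eta *: Hw) by rewrite /A; vring.
have E5 : u - y = - B by rewrite /B; vring.
have E6 : y - x = B + C by rewrite /B /C; vring.
have eB : enorm (u - y) ^+ 2 = dotp B B by rewrite enorm_sq E5 dotpNl dotpNr opprK.
have eB0 := enorm_ge0 (u - y).
move: (enorm (u - y)) eB eB0 Lip => nB eB eB0 Lip.
rewrite E2 E3 in P1; rewrite E4 E5 in P2; rewrite E5 in Lip; rewrite -/A in e1sq.
rewrite E6 in monF smonH; rewrite E1 E6 -/C.
pose G1 := Fy + eta *: Hy; pose G2 := Fw + eta *: Hw.
rewrite -/G1 in P1; rewrite -/G2 in P2; rewrite -/G1 -/G2 in Lip.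
have bi := @beta_ineq (1 - lam ^+ 2 * L ^+ 2) (2 * lam * eta * mu) A (B + C).
have c0 : 0 < 1 - lam ^+ 2 * L ^+ 2.
  have h : 0 <= lam * L by rewrite mulr_ge0 // ltW.
  rewrite subr_gt0 -exprMn expr2; apply: (le_lt_trans _ lL).
  by rewrite ler_piMr // ltW.
have d0 : 0 < 2 * lam * eta * mu by rewrite !mulr_gt0.
have {bi} := bi c0 d0; rewrite -/(betak lam L eta mu).
move: (betak lam L eta mu) => bt bi.
have hG1 : forall V, dotp G1 V = dotp Fy V + eta * dotp Hy V.
  by move=> V; rewrite /G1 dotpDl dotpZl.
have hLip : lam * (dotp G2 B - dotp G1 B) >= - (lam * (L * e1 * nB)).
  rewrite -mulrN ler_pM2l //; move: Lip; rewrite dotpNr dotpBl; lra.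
have hsq : (lam * L) ^+ 2 * e1 ^+ 2 <= (lam * L) ^+ 2 * dotp A A.
  by rewrite ler_wpM2l // sqr_ge0.
have sq0 : 0 <= (lam * L * e1 - nB) ^+ 2 by exact: sqr_ge0.
have monF' := mulr_ge0 (ltW l0) monF.
have smonH' : (lam * eta) * (mu * dotp (B + C) (B + C)) <= (lam * eta) * dotp (Hy - Hx) (B + C).
  by rewrite ler_wpM2l // mulr_ge0 // ltW.
clearbody A B C G1 G2.
move: P1 P2 monF' smonH' bi hLip; rewrite !(hG1, dotpDl, dotpDr, dotpBl, dotpBr, dotpZl, dotpZr, dotpNl, dotpNr) (dotpC B A) (dotpC C A) (dotpC C B).
move=> *; lra.
Qed.

End Step.


Section Lyap.
Variables (R : realType).
Variables (a am d T lam alpha beta : nat -> R) (D2 : R).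
Definition qq (j : nat) : R := (\prod_(i < j) (1 - beta i))^-1.

Hypothesis hb : forall j, 0 < 1 - beta j.
Hypothesis ha : forall j, 0 <= a j <= D2.
Hypothesis ham : forall j, 0 <= am j <= D2.
Hypothesis hd : forall j, 0 <= d j <= D2.
Hypothesis hamS : forall j, am j.+1 = a j.
Hypothesis ham0 : am 0 = a 0.
Hypothesis hal : forall j, 0 <= alpha j.
Hypothesis halS : forall j, alpha j.+1 <= (1 - beta j) * alpha j.
Hypothesis hal0 : alpha 0 <= 1.
Hypothesis hstep : forall j, a j.+1 <=
  (1 - beta j) * (a j + alpha j * (a j - am j) + 2 * alpha j * d j) - 2 * lam j * T j.

Lemma qq_gt0 j : 0 < qq j.
Proof. by rewrite invr_gt0 prodr_gt0 // => i _; exact: hb. Qed.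

Lemma qqS j : qq j.+1 * (1 - beta j) = qq j.
Proof.
rewrite /qq big_ord_recr /= invfM -mulrA mulVf ?mulr1 //.
by rewrite gt_eqF.
Qed.

Let c j := qq j * alpha j.

Lemma c_ge0 j : 0 <= c j.
Proof. by rewrite mulr_ge0 // ltW // qq_gt0. Qed.

Lemma cS j : c j.+1 <= c j.
Proof.
rewrite /c -(qqS j) -mulrA ler_pM2l ?qq_gt0 //.
Qed.

Lemma c_le1 j : c j <= 1.
Proof.
elim: j => [|j ih]; last exact: le_trans (cS j) ih.
by rewrite /c /qq big_ord0 invr1 mul1r.
Qed.

Let W j := qq j * a j - c j * am j + c j * D2.

Lemma W_step j : W j.+1 + 2 * lam j * qq j.+1 * T j <= W j + 2 * c j * d j.
Proof.
have h := hstep j.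
have q1 := qq_gt0 j.+1.
have h' : qq j.+1 * a j.+1 <= qq j.+1 * ((1 - beta j) * (a j + alpha j * (a j - am j)
   + 2 * alpha j * d j) - 2 * lam j * T j) by rewrite ler_pM2l.
rewrite mulrBr mulrA qqS in h'.
have e1 : c j.+1 * (D2 - a j) <= c j * (D2 - a j).
  by rewrite ler_wpM2r // ?cS // subr_ge0; case/andP: (ha j).
rewrite /W hamS.
rewrite /c /= in e1 *.
lra.
Qed.

Lemma lyap k : \sum_(j < k) 2 * lam j * qq j.+1 * T j <= (2 * k%:R + 1) * D2.
Proof.
have H : forall k, W k + \sum_(j < k) 2 * lam j * qq j.+1 * T j
   <= W 0 + \sum_(j < k) 2 * c j * d j.
  elim=> [|m ih]; first by rewrite !big_ord0.
  rewrite !big_ord_recr /=; have := W_step m; lra.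
have W0 : W 0 <= D2.
  rewrite /W /c /qq big_ord0 invr1 !mul1r ham0.
  have /andP[h1 h2] := ha 0.
  have p : 0 <= (1 - alpha 0) * (D2 - a 0) by rewrite mulr_ge0 // subr_ge0.
  lra.
have Wk : 0 <= W k.
  rewrite /W; have /andP[h1 h2] := ha k; have /andP[h3 h4] := ham k.
  have p1 : 0 <= qq k * a k by rewrite mulr_ge0 // ltW // qq_gt0.
  have p2 : 0 <= c k * (D2 - am k) by rewrite mulr_ge0 ?c_ge0 // subr_ge0.
  lra.
have Sd : \sum_(j < k) 2 * c j * d j <= \sum_(j < k) 2 * D2.
  apply: ler_sum => j _; have /andP[h1 h2] := hd j.
  have p : c j * d j <= 1 * d j by rewrite ler_wpM2r // c_le1.
  lra.
rewrite sumr_const card_ord in Sd.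
rewrite -[X in _ <= X]mulr_natr in Sd.
have := H k; lra.
Qed.

End Lyap.


Section L5.
Variables (R : realType) (n : nat).
Implicit Types u v z : 'rV[R]_n.

Lemma inertial (xj xm z : 'rV[R]_n) (al : R) : 0 <= al -> al <= 1 ->
  dotp (xj + al *: (xj - xm) - z) (xj + al *: (xj - xm) - z) <=
  dotp (xj - z) (xj - z) + al * (dotp (xj - z) (xj - z) - dotp (xm - z) (xm - z))
  + 2 * al * dotp (xj - xm) (xj - xm).
Proof.
move=> a0 a1.
have -> : xj + al *: (xj - xm) - z = (xj - z) + al *: (xj - xm) by apply/rowP => i; rewrite !mxE; ring.
have -> : xm - z = (xj - z) - 1 *: (xj - xm) by apply/rowP => i; rewrite !mxE; ring.
move: (xj - z) (xj - xm) => P D.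
rewrite sq_subZ sq_add dotpZr dotpZl dotpZr.
have d0 := dotp_ge0 D.
have h : al * (al * dotp D D) <= al * dotp D D by rewrite ler_piMl // mulr_ge0.
rewrite expr2; lra.
Qed.
End L5.

Lemma beta_props (R : realType) (lam lo hi L eta mu : R) :
  0 < lo -> lo <= lam -> lam <= hi -> 0 < L -> hi * L < 1 -> 0 < eta -> 0 < mu ->
  [/\ 0 < betak lam L eta mu, betak lam L eta mu < 1 &
     ((1 - hi ^+ 2 * L ^+ 2)^-1 + (2 * lo * eta * mu)^-1)^-1 <= betak lam L eta mu].
Proof.
move=> lo0 hlo hhi L0 hL e0 m0.
have lam0 : 0 < lam by exact: lt_le_trans hlo.
have lL0 : 0 <= lam * L by rewrite mulr_ge0 // ltW.
have lLh : lam * L <= hi * L by rewrite ler_pM2r.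
have sq1 : (lam * L) ^+ 2 <= (hi * L) ^+ 2 by rewrite expr2 [X in _ <= X]expr2 ler_pM.
have hL1 : (hi * L) ^+ 2 < 1.
  rewrite expr2; apply: (le_lt_trans _ hL); rewrite ler_piMr //; first by apply: le_trans lLh.
  exact: ltW.
rewrite -!exprMn in sq1 hL1 *.
have c0 : 0 < 1 - (lam * L) ^+ 2 by lra.
have c'0 : 0 < 1 - (hi * L) ^+ 2 by lra.
have A1 : 1 <= (1 - (lam * L) ^+ 2)^-1.
  by rewrite invf_ge1 //; have := sqr_ge0 (lam * L); lra.
have AA : (1 - (lam * L) ^+ 2)^-1 <= (1 - (hi * L) ^+ 2)^-1.
  by rewrite lef_pV2 ?posrE //; lra.
have B0 : 0 < (2 * lam * eta * mu)^-1 by rewrite invr_gt0 !mulr_gt0.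
have BB : (2 * lam * eta * mu)^-1 <= (2 * lo * eta * mu)^-1.
  by rewrite lef_pV2 ?posrE ?mulr_gt0 // !ler_pM2r // ler_pM2l.
rewrite /betak -!exprMn.
have S0 : 0 < (1 - (lam * L) ^+ 2)^-1 + (2 * lam * eta * mu)^-1 by lra.
split.
- by rewrite invr_gt0.
- by rewrite invf_lt1 //; lra.
- rewrite lef_pV2 ?posrE //; last by have := invr_gt0 (1 - (hi * L) ^+ 2); lra.
  lra.
Qed.

Lemma compact_enorm_bound (R : realType) n (X : set 'rV[R]_n) : compact X ->
  exists M, forall a b, X a -> X b -> enorm (a - b) <= M.
Proof.
move=> cX; have [M [Mr HM]] := compact_bounded cX.
have := HM (M + 1); rewrite ltrDl ltr01 => /(_ isT) hM.
set K := M + 1.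
have ent : forall a, X a -> forall i, `|a ord0 i| <= K.
  move=> a Xa i; apply: le_trans (hM a Xa).
  have /mapP[j Hj ->] : `|a ord0 i| \in [seq `|a x.1 x.2| | x : 'I_1 * 'I_n].
    by apply/mapP; exists (ord0, i) => //=; rewrite mem_enum.
  have -> : `|a| = mx_norm a by [].
  by rewrite mx_normrE; apply/bigmax_geP; right => /=; exists j.
exists (Num.sqrt (n%:R * (2 * K) ^+ 2)) => a b Xa Xb.
rewrite /enorm ler_sqrt; last by rewrite mulr_ge0 // sqr_ge0.
rewrite /dotp.
have -> : n%:R * (2 * K) ^+ 2 = \sum_(i < n) (2 * K) ^+ 2.
  by rewrite sumr_const card_ord mulr_natl.
apply: ler_sum => i _; rewrite !mxE.
have h1 : `|a ord0 i - b ord0 i| <= 2 * K.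
  apply: le_trans (ler_normB _ _) _.
  have := ent a Xa i; have := ent b Xb i; lra.
have h0 := normr_ge0 (a ord0 i - b ord0 i).
rewrite -[X in X <= _]ger0_norm; last by rewrite -expr2 sqr_ge0.
by rewrite normrM expr2 ler_pM.
Qed.

Unset Implicit Arguments.

Theorem corollary4p18 (R : realType) (n : nat)
  (F H : 'rV[R]_n -> 'rV[R]_n) (DomF DomH X Omega : set 'rV[R]_n)
  (LF LH mu : R) (PX POmega : 'rV[R]_n -> 'rV[R]_n)
  (eta lamlo lamhi : R) (lam alpha : nat -> R)
  (x w w' y : nat -> 'rV[R]_n) :
  0 < LF -> 0 < LH -> 0 < mu ->
  monotone_op DomF F -> monotone_op DomH H ->
  lipschitz_op DomF F LF -> lipschitz_op DomH H LH ->
  str_monotone_op DomH H mu ->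
  X !=set0 -> compact X -> convex_set X ->
  Omega !=set0 -> closed Omega -> convex_set Omega ->
  X `<=` Omega -> Omega `<=` DomF `&` DomH ->
  is_projection X PX -> is_projection Omega POmega ->
  VIsol F X !=set0 ->
  0 < eta -> 0 < lamlo -> lamlo <= lamhi -> lamhi < (LF + eta * LH)^-1 ->
  (forall k, lamlo <= lam k <= lamhi) ->
  (forall k, 0 <= alpha k) -> alpha 0%N <= 1 ->
  (forall k, alpha k.+1 <=
     (1 - betak (lam k) (LF + eta * LH) eta mu) * alpha k) ->
  (* IneIREG iterates; x_{-1} = x_0 is encoded by x (0.-1) = x 0 *)
  X (x 0%N) ->
  (forall k, w k = x k + alpha k *: (x k - x k.-1)) ->
  (forall k, w' k = POmega (w k)) ->
  (forall k, y k = PX (w k - lam k *: (F (w' k) + eta *: H (w' k)))) ->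
  (forall k, x k.+1 = PX (w k - lam k *: (F (y k) + eta *: H (y k)))) ->
  let L := LF + eta * LH in
  let beta_seq := fun k => betak (lam k) L eta mu in
  let p := pk beta_seq in
  let beta := ((1 - lamhi ^+ 2 * L ^+ 2)^-1 + (2 * lamlo * eta * mu)^-1)^-1 in
  let DX := diamX X in
  let CH := supnorm H X in
  forall k : nat, (1 <= k)%N ->
    0 <= Gap (ybar lam p eta y k) F X /\
    Gap (ybar lam p eta y k) F X <=
      (k.+1)%:R * (1 - beta) ^+ k * (DX ^+ 2 / lamlo)
      + eta * (lamhi * CH * DX / lamlo).
Proof.
move=> LF0 LH0 mu0 monF monH lipF lipH smonH X0 cX cvX O0 clO cvO XO ODom hPX hPO
  Q0 eta0 lo0 lohi hiL hlam hal0 hal01 halS Xx0 hw hw' hy hx L beta_seq p beta DX CH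
  k k1.
have L0 : 0 < L by rewrite /L addr_gt0 // mulr_gt0.
have hiL1 : lamhi * L < 1.
  have : lamhi * L < L^-1 * L by rewrite ltr_pM2r.
  by rewrite mulVf ?gt_eqF.
have XF : forall v, X v -> DomF v by move=> v /XO /ODom [].
have XH : forall v, X v -> DomH v by move=> v /XO /ODom [].
have OF : forall v, Omega v -> DomF v by move=> v /ODom [].
have OH : forall v, Omega v -> DomH v by move=> v /ODom [].
have hb : forall j, [/\ 0 < beta_seq j, beta_seq j < 1 & beta <= beta_seq j].
  move=> j; have /andP[h1 h2] := hlam j.
  exact: beta_props lo0 h1 h2 L0 hiL1 eta0 mu0.
have Xx : forall j, X (x j).
  by elim=> [//|j _]; rewrite hx; case: (hPX (w j - lam j *: (F (y j) + eta *: H (y j)))).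
have Xy : forall j, X (y j).
  by move=> j; rewrite hy; case: (hPX (w j - lam j *: (F (w' j) + eta *: H (w' j)))).
have Ow : forall j, Omega (w' j).
  by move=> j; rewrite hw'; case: (hPO (w j)).
have [x0 Xx0'] := X0.
have [M hM] := compact_enorm_bound cX.
have hD : forall a b, X a -> X b -> enorm (a - b) <= DX.
  move=> a b Xa Xb; apply: ub_le_sup; last by exists (a, b).
  by exists M => r [[a' b'] [/= Xa' Xb'] <-]; exact: hM.
have DX0 : 0 <= DX by apply: le_trans (hD x0 x0 Xx0' Xx0'); exact: enorm_ge0.
have hC : forall a, X a -> enorm (H a) <= CH.
  move=> a Xa; apply: ub_le_sup; last by exists a.
  exists (Num.sqrt (2 * dotp (H x0) (H x0) + 2 * (LH * M) ^+ 2)).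
  move=> r [b Xb <-].
  rewrite /enorm ler_sqrt; last first.
    by rewrite addr_ge0 // mulr_ge0 ?dotp_ge0 ?sqr_ge0.
  have -> : H b = H x0 + (H b - H x0) by rewrite addrC subrK.
  rewrite sq_add.
  have y1 := @young _ _ (H x0) (H b - H x0) 1 ltr01.
  rewrite invr1 !mul1r in y1.
  have l1 := lipH _ _ (XH _ Xb) (XH _ Xx0').
  have l2 : LH * enorm (b - x0) <= LH * M by rewrite ler_pM2l // hM.
  have e0 := enorm_ge0 (H b - H x0).
  have l3 : enorm (H b - H x0) * enorm (H b - H x0) <= (LH * M) * (LH * M).
    by apply: ler_pM => //; apply: le_trans l1 l2.
  rewrite -expr2 enorm_sq -expr2 in l3.
  lra.
have CH0 : 0 <= CH by apply: le_trans (hC x0 Xx0'); exact: enorm_ge0.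
have hal1 : forall j, alpha j <= 1.
  elim=> [//|j ih]; apply: le_trans (halS j) _.
  have [h1 h2 _] := hb j.
  apply: le_trans ih; rewrite ler_piMl ?hal0 // -/L -/(beta_seq j); lra.
have sqD : forall a b, X a -> X b -> 0 <= dotp (a - b) (a - b) <= DX ^+ 2.
  move=> a b Xa Xb; rewrite dotp_ge0 /= -enorm_sq expr2 [X in _ <= X]expr2.
  by apply: ler_pM; rewrite ?enorm_ge0 ?hD.
have hsum : forall z, X z -> \sum_(j < k) 2 * lam j * qq beta_seq j.+1 *
    (dotp (F z) (y j - z) + eta * dotp (H z) (y j - z)) <= (2 * k%:R + 1) * DX ^+ 2.
  move=> z Xz.
  apply: (@lyap R (fun j => dotp (x j - z) (x j - z))
    (fun j => dotp (x j.-1 - z) (x j.-1 - z)) (fun j => dotp (x j - x j.-1) (x j - x j.-1))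
    (fun j => dotp (F z) (y j - z) + eta * dotp (H z) (y j - z)) lam alpha beta_seq (DX ^+ 2)).
  - by move=> j; have [_ h _] := hb j; rewrite subr_gt0.
  - by move=> j; exact: sqD.
  - by move=> j; exact: sqD.
  - by move=> j; exact: sqD.
  - by [].
  - by [].
  - exact: hal0.
  - exact: halS.
  - exact: hal01.
  move=> j /=.
  have /andP[lj1 lj2] := hlam j.
  have lj0 : 0 < lam j by exact: lt_le_trans lj1.
  have ljL : lam j * L < 1 by apply: le_lt_trans hiL1; rewrite ler_pM2r.
  have P1 : dotp (w j - lam j *: (F (y j) + eta *: H (y j)) - x j.+1) (z - x j.+1) <= 0.
    by rewrite hx; apply: (proj_vi cvX hPX).
  have P2 : dotp (w j - lam j *: (F (w' j) + eta *: H (w' j)) - y j) (x j.+1 - y j) <= 0.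
    by rewrite hy; apply: (proj_vi cvX hPX).
  have Lip : dotp ((F (w' j) + eta *: H (w' j)) - (F (y j) + eta *: H (y j))) (x j.+1 - y j)
      <= L * enorm (w' j - y j) * enorm (x j.+1 - y j).
    have -> : dotp ((F (w' j) + eta *: H (w' j)) - (F (y j) + eta *: H (y j))) (x j.+1 - y j)
      = dotp (F (w' j) - F (y j)) (x j.+1 - y j) + eta * dotp (H (w' j) - H (y j)) (x j.+1 - y j).
      by rewrite !(dotpBl, dotpDl, dotpZl); ring.
    have ev0 := enorm_ge0 (x j.+1 - y j).
    have c1 : dotp (F (w' j) - F (y j)) (x j.+1 - y j) <= LF * enorm (w' j - y j) * enorm (x j.+1 - y j).
      apply: le_trans (CS _ _) _; rewrite ler_wpM2r //.
      exact: lipF (OF _ (Ow j)) (XF _ (Xy j)).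
    have c2 : dotp (H (w' j) - H (y j)) (x j.+1 - y j) <= LH * enorm (w' j - y j) * enorm (x j.+1 - y j).
      apply: le_trans (CS _ _) _; rewrite ler_wpM2r //.
      exact: lipH (OH _ (Ow j)) (XH _ (Xy j)).
    have c2' := ler_wpM2l (ltW eta0) c2.
    rewrite /L; lra.
  have e1sq : enorm (w' j - y j) ^+ 2 <= dotp (w j - y j) (w j - y j).
    by rewrite enorm_sq hw'; apply: (proj_nonexp cvO hPO); apply: XO.
  have mF := monF (y j) z (XF _ (Xy j)) (XF _ Xz).
  have mH := smonH (y j) z (XH _ (Xy j)) (XH _ Xz); rewrite enorm_sq in mH.
  have st := step_ineq lj0 eta0 mu0 (ltW L0) ljL P1 P2 Lip (enorm_ge0 _) e1sq mF mH.
  have ine := inertial (x j) (x j.-1) z (hal0 j) (hal1 j).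
  rewrite -hw in ine.
  have [b0 b1 _] := hb j.
  have ine' := ler_wpM2l (x := 1 - beta_seq j) (ltac:(lra)) ine.
  rewrite -/(beta_seq j) in st.
  lra.
have hbq : forall j, 0 < 1 - beta_seq j by move=> j; have [_ h _] := hb j; rewrite subr_gt0.
pose q := qq beta_seq.
have pq : forall j, p j = q j.+1 by [].
pose S := \sum_(j < k) lam j * q j.+1.
have s0 : forall j, 0 <= lam j * q j.+1.
  move=> j; have /andP[h1 _] := hlam j.
  by rewrite mulr_ge0 // ?(ltW (qq_gt0 hbq _)) // (le_trans (ltW lo0) h1).
have Sge' : forall m, (1 <= m)%N -> lamlo * q m <= \sum_(j < m) lam j * q j.+1.
  case=> [//|k'] _.
  rewrite big_ord_recr /=.
  have : 0 <= \sum_(i < k') lam i * q i.+1 by apply: sumr_ge0 => i _; exact: s0.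
  have /andP[h1 _] := hlam k'.
  have : lamlo * q k'.+1 <= lam k' * q k'.+1 by rewrite ler_pM2r // qq_gt0.
  lra.
have Sge : lamlo * q k <= S by exact: Sge'.
have qk0 : 0 < q k by exact: qq_gt0.
have S0 : 0 < S by apply: lt_le_trans Sge; rewrite mulr_gt0.
have elt : forall z, dotp (F z) (ybar lam p eta y k - z) =
    S^-1 * \sum_(j < k) lam j * q j.+1 * dotp (F z) (y j - z).
  move=> z.
  rewrite /ybar /Lambdak dotpBr.
  have H1 := dotpZr ((\sum_(j < k) lam j * eta * p j)^-1) (\sum_(j < k) (lam j * eta * p j) *: y j) (F z).
  rewrite H1 dotp_sumr.
  rewrite [\sum_(j < k) dotp (F z) _](eq_bigr (fun j : 'I_k => lam j * eta * p j * dotp (F z) (y j))); last by move=> j _; apply: dotpZr.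
  under [in RHS]eq_bigr do rewrite dotpBr mulrBr.
  rewrite sumrB -mulr_suml -/S.
  have -> : \sum_(j < k) lam j * eta * p j = eta * S.
    by rewrite /S mulr_sumr; apply: eq_bigr => j _; rewrite pq; ring.
  have -> : \sum_(j < k) lam j * eta * p j * dotp (F z) (y j) =
      eta * \sum_(j < k) lam j * q j.+1 * dotp (F z) (y j).
    by rewrite mulr_sumr; apply: eq_bigr => j _; rewrite pq; ring.
  by field; rewrite ?gt_eqF.
have prodb : (q k)^-1 <= (1 - beta) ^+ k.
  have -> : (1 - beta) ^+ k = \prod_(i < k) (1 - beta) by rewrite prodr_const card_ord.
  rewrite /q /qq invrK; apply: ler_prod => i _.
  have [h1 h2 h3] := hb i; apply/andP; split; lra.
have Sinv : S^-1 <= (1 - beta) ^+ k / lamlo.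
  have Sge2 : S^-1 <= (lamlo * q k)^-1 by rewrite lef_pV2 ?posrE // mulr_gt0.
  apply: (le_trans Sge2); rewrite invfM mulrC ler_pM2r ?invr_gt0 //.
have Sinv0 : 0 <= S^-1 by rewrite invr_ge0 ltW.
have bound : forall z, X z -> dotp (F z) (ybar lam p eta y k - z) <=
    k.+1%:R * (1 - beta) ^+ k * (DX ^+ 2 / lamlo) + eta * (lamhi * CH * DX / lamlo).
  move=> z Xz; rewrite elt.
  have hs := hsum z Xz.
  have hterm : forall j : 'I_k, 2 * (lam j * q j.+1 * dotp (F z) (y j - z))
      + (- (2 * eta * (CH * DX))) * (lam j * q j.+1)
      <= 2 * lam j * qq beta_seq j.+1 * (dotp (F z) (y j - z) + eta * dotp (H z) (y j - z)).
    move=> j.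
    have hh : - dotp (H z) (y j - z) <= CH * DX.
      rewrite -dotpNr opprB; apply: le_trans (CS _ _) _.
      by apply: ler_pM; rewrite ?enorm_ge0 ?hC ?hD.
    have sj := s0 j.
    have : lam j * q j.+1 * (- dotp (H z) (y j - z)) <= lam j * q j.+1 * (CH * DX).
      by rewrite ler_wpM2l.
    rewrite /q; move=> h.
    have : 0 < eta by [].
    nra.
  have := le_trans (ler_sum _ (fun j _ => hterm j)) hs.
  rewrite big_split /= -!mulr_sumr -/S.
  set G := \sum_(j < k) _ * _.
  move=> hG.
  have hG' : G <= (k%:R + 2^-1) * DX ^+ 2 + eta * (CH * DX) * S by lra.
  have t1 : S^-1 * ((k%:R + 2^-1) * DX ^+ 2) <= ((1 - beta) ^+ k / lamlo) * (k.+1%:R * DX ^+ 2).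
    apply: ler_pM => //.
      by rewrite mulr_ge0 // ?sqr_ge0 // addr_ge0 // invr_ge0.
    apply: ler_wpM2r; first exact: sqr_ge0.
    by rewrite -[k.+1%:R]natr1 lerD2l invf_le1 // ler1n.
  have t2 : CH * DX <= lamhi * CH * DX / lamlo.
    have r : 1 <= lamhi / lamlo by rewrite ler_pdivlMr // mul1r.
    have -> : lamhi * CH * DX / lamlo = (lamhi / lamlo) * (CH * DX) by ring.
    by rewrite -[X in X <= _]mul1r ler_wpM2r // mulr_ge0.
  have t3 : S^-1 * G <= S^-1 * ((k%:R + 2^-1) * DX ^+ 2 + eta * (CH * DX) * S).
    by rewrite ler_wpM2l.
  have e : S^-1 * ((k%:R + 2^-1) * DX ^+ 2 + eta * (CH * DX) * S) =
      S^-1 * ((k%:R + 2^-1) * DX ^+ 2) + eta * (CH * DX) by field; rewrite gt_eqF.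
  rewrite e in t3.
  have t2' := ler_wpM2l (ltW eta0) t2.
  have -> : k.+1%:R * (1 - beta) ^+ k * (DX ^+ 2 / lamlo) =
    (1 - beta) ^+ k / lamlo * (k.+1%:R * DX ^+ 2) by ring.
  lra.
rewrite /Gap.
set A := [set dotp (F z) (ybar lam p eta y k - z) | z in X].
have ubA : ubound A (k.+1%:R * (1 - beta) ^+ k * (DX ^+ 2 / lamlo) + eta * (lamhi * CH * DX / lamlo)).
  by move=> r [z Xz <-]; exact: bound z Xz.
split.
- have [zs [Xzs hzs]] := Q0.
  have hsup := ub_le_sup (ex_intro _ _ ubA).
  apply: le_trans (hsup _ _); last by exists zs.
  apply: mulr_ge0 => //; apply: sumr_ge0 => j _.
  by apply: mulr_ge0; [exact: s0 | exact: hzs].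
- by apply: ge_sup => //; exists (dotp (F x0) (ybar lam p eta y k - x0)); exists x0.
Qed.
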